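(* If $r\ge 2$ and $t\ge 1$, then $6\le \mathrm{gp}(P_r\boxtimes C_{2t+1})\le 7$. Moreover, if $t\in\{1,2\}$ or $r=2$, then $\mathrm{gp}(P_r\boxtimes C_{2t+1})=6$.
   Context: All graphs are finite and simple; $P_r$ is the path on $r$ vertices and $C_m$ the cycle on $m$ vertices. The strong product $G\boxtimes H$ has vertex set $V(G)\times V(H)$, with distinct $(g,h),(g',h')$ adjacent iff ($g=g'$ or $gg'\in E(G)$) and ($h=h'$ or $hh'\in E(H)$). For a connected graph $G$, a set $S\subseteq V(G)$ is a general position set if no three pairwise distinct vertices of $S$ lie on a common geodesic (shortest path); $\mathrm{gp}(G)$ is the maximum cardinality of a general position set. *)

(* Defs.v *)
From Stdlib Require Import ClassicalDescription.
From mathcomp Require Import all_boot.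
Set Implicit Arguments. Unset Strict Implicit. Unset Printing Implicit Defensive.

Definition pb (P : Prop) : bool :=
  if excluded_middle_informative P then true else false.

Definition path_rel (r : nat) : rel 'I_r :=
  fun i j => (i.+1 == j :> nat) || (j.+1 == i :> nat).

(* Cycle C_m on vertices {0,...,m-1} (used with m >= 3). *)
Definition cycle_rel (m : nat) : rel 'I_m :=
  fun i j => (i != j) && ((i.+1 %% m == j :> nat) || (j.+1 %% m == i :> nat)).

Definition strong_rel (T1 T2 : finType) (e1 : rel T1) (e2 : rel T2)
  : rel (T1 * T2) :=
  fun x y => [&& x != y, (x.1 == y.1) || e1 x.1 y.1
                       & (x.2 == y.2) || e2 x.2 y.2].

Definition geodesic (T : finType) (e : rel T) (x : T) (p : seq T) : Prop :=
  path e x p /\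
  forall q : seq T, path e x q -> last x q = last x p -> size p <= size q.

Definition gp_set (T : finType) (e : rel T) (S : {set T}) : Prop :=
  ~ exists (x : T) (p : seq T) (u v w : T),
      [/\ geodesic e x p,
          [/\ u \in S, v \in S & w \in S],
          [/\ u != v, v != w & u != w] &
          [/\ u \in x :: p, v \in x :: p & w \in x :: p]].

Definition gp (T : finType) (e : rel T) : nat :=
  \max_(S : {set T} | pb (gp_set e S)) #|S|.

(* Main.v *)
Require Import Defs.
From mathcomp Require Import all_boot.
From mathcomp Require Import zify.
From Stdlib Require Import ClassicalDescription.

Set Implicit Arguments. Unset Strict Implicit. Unset Printing Implicit Defensive.

Definition absd a b := a - b + (b - a).
Definition cd M a b := minn (absd a b) (M - absd a b).

Section Metric.
Variables R M : nat.
Notation T := ('I_R * 'I_M)%type.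
Notation E := (strong_rel (@path_rel R) (@cycle_rel M)).

Definition Dist (x y : T) := maxn (absd x.1 y.1) (cd M x.2 y.2).

Lemma Dxx x : Dist x x = 0.
Proof. rewrite /Dist /cd /absd; lia. Qed.

Lemma Dsym x y : Dist x y = Dist y x.
Proof. rewrite /Dist /cd /absd; lia. Qed.

Lemma absd_tri a b c : absd a c <= absd a b + absd b c.
Proof. rewrite /absd; lia. Qed.

Lemma cd_tri a b c : a < M -> b < M -> c < M -> cd M a c <= cd M a b + cd M b c.
Proof. rewrite /cd /absd. lia. Qed.

Lemma Dtri x y z : Dist x z <= Dist x y + Dist y z.
Proof.
have h1 := absd_tri x.1 y.1 z.1.
have h2 := cd_tri (ltn_ord x.2) (ltn_ord y.2) (ltn_ord z.2).
rewrite /Dist. move: h1 h2.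
move: (absd x.1 y.1) (absd y.1 z.1) (absd x.1 z.1) (cd M x.2 y.2) (cd M y.2 z.2) (cd M x.2 z.2).
move=> a b c d e f; lia.
Qed.

Lemma modS (a : nat) : a < M -> a.+1 %% M = if a.+1 == M then 0 else a.+1.
Proof.
move=> aM; case: eqP => [->|ne]; first by rewrite modnn.
by rewrite modn_small //; lia.
Qed.

Lemma edgeD x y : E x y -> Dist x y <= 1.
Proof.
case/and3P=> _ h1 h2.
have := ltn_ord x.2; have := ltn_ord y.2.
have ha : absd x.1 y.1 <= 1.
  case/orP: h1 => [/eqP->|]; first by rewrite /absd; lia.
  by rewrite /path_rel => /orP[/eqP h|/eqP h]; rewrite /absd; lia.
have hb : x.2 < M -> y.2 < M -> cd M x.2 y.2 <= 1.
  move=> xl yl.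
  case/orP: h2 => [/eqP->|]; first by rewrite /cd /absd; lia.
  rewrite /cycle_rel => /andP[_ /orP[/eqP h|/eqP h]].
    move: h; rewrite modS //; case: eqP => ? ?; rewrite /cd /absd; lia.
  move: h; rewrite modS //; case: eqP => ? ?; rewrite /cd /absd; lia.
move=> a b; have := hb b a; rewrite /Dist. move: ha; move: (absd _ _) (cd _ _ _) => u v. lia.
Qed.

Lemma walk_nth x p i k : path E x p -> i <= k -> k <= size p ->
  Dist (nth x (x :: p) i) (nth x (x :: p) k) <= k - i.
Proof.
elim: p x i k => [|y p IH] x i k /=.
  move=> _ ik k0; have k0' : k = 0 by lia. have i0 : i = 0 by lia. by subst; rewrite /= Dxx.
case/andP=> exy pp ik ks.
case: i ik => [|i] ik; case: k ik ks => [|k] ik ks /=; rewrite /= in ks.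
- by rewrite Dxx.
- rewrite (set_nth_default y) /=; last by lia.
  have ksp : k <= size p by move: ks; rewrite ltnS.
  have h1 := IH y 0 k pp (leq0n _) ksp.
  have h2 := edgeD exy.
  rewrite subn0 /= in h1; rewrite subn0; apply: leq_trans (Dtri x y _) _.
  by rewrite -add1n; exact: leq_add h2 h1.
- lia.
- have ik' : i <= k by lia.
  have ksp : k <= size p by move: ks; rewrite ltnS.
  rewrite [nth x _ i](set_nth_default y) /=; last by rewrite ltnS (leq_trans ik').
  rewrite [nth x _ k](set_nth_default y) /=; last by rewrite ltnS.
  have ik'' : i <= k by lia.
  by have := IH y i k pp ik' ksp; rewrite subSS.
Qed.

Lemma walkD x p : path E x p -> Dist x (last x p) <= size p.
Proof.
move=> pp; have := walk_nth pp (leq0n (size p)) (leqnn _).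
by rewrite /= -[last x p]/(last x (x :: p)) -nth_last /= subn0.
Qed.

End Metric.

Set Implicit Arguments. Unset Strict Implicit. Unset Printing Implicit Defensive.

Definition st1 a b := if a < b then a.+1 else if b < a then a.-1 else a.
Definition fw M a b := if a <= b then b - a else b + M - a.
Definition st2 M a b :=
  if a == b then a else
  if fw M a b <= M - fw M a b then (if a.+1 == M then 0 else a.+1)
  else (if a == 0 then M.-1 else a.-1).

Ltac cases := repeat match goal with |- context [if ?b then _ else _] => case: (boolP b) => ? end.

Lemma st1_lt R a b : a < R -> b < R -> st1 a b < R.
Proof. rewrite /st1; cases; lia. Qed.
Lemma st1_abs a b : absd (st1 a b) b = absd a b - 1.
Proof. rewrite /st1 /absd; cases; lia. Qed.
Lemma st1_adj a b : [\/ st1 a b = a, st1 a b = a.+1 | (st1 a b).+1 = a].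
Proof. rewrite /st1; cases; [apply: Or32 | apply: Or33 | apply: Or31]; lia. Qed.

Lemma st2_lt M a b : a < M -> b < M -> st2 M a b < M.
Proof. move=> aM bM; rewrite /st2 /fw; case: (leqP a b) => ?; cases; lia. Qed.
Lemma st2_cd M a b : a < M -> b < M -> cd M (st2 M a b) b = cd M a b - 1.
Proof. move=> aM bM; rewrite /st2 /fw /cd /absd; case: (leqP a b) => ?; cases; lia. Qed.
Lemma st2_adj M a b : a < M -> b < M -> [\/ st2 M a b = a,
   st2 M a b = (if a.+1 == M then 0 else a.+1) |
   a = (if (st2 M a b).+1 == M then 0 else (st2 M a b).+1)].
Proof. move=> aM bM; rewrite /st2 /fw; case: (leqP a b) => ?; cases; try (by apply: Or31); try (by apply: Or32);
  apply: Or33; cases; lia. Qed.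

Section Walk.
Variables R M : nat.
Notation T := ('I_R * 'I_M)%type.
Notation E := (strong_rel (@path_rel R) (@cycle_rel M)).

Lemma step_edge (x y : T) : 0 < Dist x y ->
  exists z, E x z /\ Dist z y = (Dist x y).-1.
Proof.
move=> hpos.
pose z1 : 'I_R := Ordinal (st1_lt (ltn_ord x.1) (ltn_ord y.1)).
pose z2 : 'I_M := Ordinal (st2_lt (ltn_ord x.2) (ltn_ord y.2)).
have hD : Dist (z1, z2) y = (Dist x y).-1.
  rewrite /Dist /= st1_abs st2_cd //.
  by move: (absd _ _) (cd _ _ _) => u v; lia.
exists (z1, z2); split => //.
apply/and3P; split.
- apply/negP => /eqP exz; move: hD; rewrite -exz; lia.
- rewrite /path_rel /=; case: (st1_adj x.1 y.1) => h.
  + by apply/orP; left; apply/eqP; apply: val_inj.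
  + by apply/orP; right; apply/orP; left; apply/eqP.
  + by apply/orP; right; apply/orP; right; apply/eqP.
- rewrite /cycle_rel /=.
  have xM := ltn_ord x.2; have zM := ltn_ord z2.
  case: (st2_adj (ltn_ord x.2) (ltn_ord y.2)) => h.
  + by apply/orP; left; apply/eqP; apply: val_inj.
  + case: (eqVneq x.2 z2) => [e|ne]; first by apply/orP; left; apply/eqP.
    apply/orP; right; apply/andP; split; first done. apply/orP; left.
    by rewrite modS // h.
  + case: (eqVneq x.2 z2) => [e|ne]; first by apply/orP; left; apply/eqP.
    apply/orP; right; apply/andP; split; first done. apply/orP; right.
    by rewrite modS // -h.
Qed.

Lemma walk_exists k (x y : T) : Dist x y = k ->
  exists p, [/\ path E x p, last x p = y & size p = k].
Proof.
elim: k x => [|k IH] x.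
  move=> h; exists [::]; split => //=.
  move: h; rewrite /Dist /cd /absd => h.
  have h1 : x.1 = y.1 by apply: ord_inj; lia.
  have xM := ltn_ord x.2; have yM := ltn_ord y.2.
  have h2 : x.2 = y.2 by apply: ord_inj; lia.
  by case: x y h1 h2 {h xM yM} => a b [c d] /= -> ->.
move=> h; have [z [exz hz]] := step_edge (x := x) (y := y) ltac:(lia).
have [p [pp lp sp]] := IH z ltac:(lia).
by exists (z :: p); rewrite /= exz pp sp lp.
Qed.

End Walk.

Set Implicit Arguments. Unset Strict Implicit. Unset Printing Implicit Defensive.

Lemma order3 (i j k : nat) : i != j -> j != k -> i != k ->
  (i < j < k) \/ (i < k < j) \/ (j < i < k) \/ (j < k < i) \/ (k < i < j) \/ (k < j < i).
Proof. lia. Qed.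

Section GP.
Variables R M : nat.
Notation T := ('I_R * 'I_M)%type.
Notation E := (strong_rel (@path_rel R) (@cycle_rel M)).

Lemma betw_notgp (S : {set T}) a b c : gp_set E S ->
  a \in S -> b \in S -> c \in S -> a != b -> b != c -> a != c ->
  Dist a b + Dist b c <= Dist a c -> False.
Proof.
move=> gS aS bS cS ab bc ac hle; apply: gS.
have [p1 [pp1 lp1 sp1]] := walk_exists (erefl (Dist a b)).
have [p2 [pp2 lp2 sp2]] := walk_exists (erefl (Dist b c)).
exists a, (p1 ++ p2), a, b, c; split => //.
- split; first by rewrite cat_path pp1 lp1 pp2.
  move=> q pq lq; rewrite size_cat sp1 sp2.
  apply: (leq_trans hle); have := walkD pq.
  by rewrite lq last_cat lp1 lp2.
- split; first by rewrite mem_head.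
  + have : b \in a :: p1 by rewrite -lp1 mem_last.
    by rewrite !inE mem_cat => /orP[->|->] //; rewrite orbT.
  + have : c \in b :: p2 by rewrite -lp2 mem_last.
    have cb : (c == b) = false by apply/negbTE; rewrite eq_sym.
    by rewrite inE cb /= => h; rewrite inE mem_cat h !orbT.
Qed.

Lemma geo_len x p : geodesic E x p -> Dist x (last x p) = size p.
Proof.
case=> pp hmin; apply/eqP; rewrite eqn_leq walkD //=.
have [q [pq lq sq]] := walk_exists (erefl (Dist x (last x p))).
by rewrite -sq; apply: hmin.
Qed.

Lemma geo_idx x p y : geodesic E x p -> y \in x :: p ->
  Dist x y = index y (x :: p).
Proof.
move=> g yin; have hn := geo_len g; case: g => pp _.
have il : index y (x :: p) <= size p by have := index_mem y (x :: p); rewrite yin /= ltnS.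
have h1 := walk_nth pp (leq0n _) il.
have h2 := walk_nth pp il (leqnn _).
rewrite nth_index // in h1 h2.
rewrite [nth x _ 0]/= in h1.
have e : nth x (x :: p) (size p) = last x p by have := nth_last x (x :: p).
rewrite e in h2.
rewrite subn0 in h1.
have h3 := Dtri x y (last x p).
rewrite hn in h3; move: h1 h2 h3 il; move: (Dist x y) (Dist y (last x p)) (index y (x :: p)) => u v w; lia.
Qed.

Lemma geo_betw x p a b c : geodesic E x p -> a \in x :: p -> b \in x :: p -> c \in x :: p ->
  index a (x :: p) <= index b (x :: p) <= index c (x :: p) ->
  Dist a b + Dist b c <= Dist a c.
Proof.
move=> g ain bin cin /andP[iab ibc].
have ha := geo_idx g ain; have hc := geo_idx g cin.
case: (g) => pp _.
have hcs : index c (x :: p) <= size p by have := index_mem c (x :: p); rewrite cin /= ltnS.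
have hbs : index b (x :: p) <= size p by apply: leq_trans hcs.
have h1 := walk_nth pp iab hbs.
have h2 := walk_nth pp ibc hcs.
rewrite !nth_index // in h1 h2.
have h3 := Dtri x a c.
move: h1 h2 h3; rewrite ha hc.
move: (Dist a b) (Dist b c) (Dist a c) (index a _) (index b _) (index c _) iab ibc.
move=> u v w i j k; lia.
Qed.

Lemma gp_of_strict (S : {set T}) :
  (forall a b c, a \in S -> b \in S -> c \in S -> a != b -> b != c -> a != c ->
     Dist a c < Dist a b + Dist b c) -> gp_set E S.
Proof.
move=> H [x [p [u [v [w [g [uS vS wS] [uv vw uw] [ui vi wi]]]]]]].
have key : forall a b c, a \in [:: u; v; w] -> b \in [:: u; v; w] -> c \in [:: u; v; w] ->
    a != b -> b != c -> a != c ->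
    index a (x :: p) <= index b (x :: p) <= index c (x :: p) -> False.
  move=> a b c ain bin cin ab bc ac hi.
  have inS : forall y, y \in [:: u; v; w] -> y \in S.
    by move=> y; rewrite !inE => /or3P[]/eqP->.
  have inP : forall y, y \in [:: u; v; w] -> y \in x :: p.
    by move=> y; rewrite !inE => /or3P[]/eqP->.
  have := geo_betw g (inP _ ain) (inP _ bin) (inP _ cin) hi.
  have := H a b c (inS _ ain) (inS _ bin) (inS _ cin) ab bc ac.
  by move=> h1 h2; have := leq_trans h1 h2; rewrite ltnn.
have inj : forall a b, a \in x :: p -> b \in x :: p -> index a (x :: p) = index b (x :: p) -> a = b.
  by move=> a b ain bin e; rewrite -(nth_index x ain) -(nth_index x bin) e.
have m1 : u \in [:: u; v; w] by rewrite !inE eqxx.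
have m2 : v \in [:: u; v; w] by rewrite !inE eqxx orbT.
have m3 : w \in [:: u; v; w] by rewrite !inE eqxx !orbT.
have vu : v != u by rewrite eq_sym.
have wv : w != v by rewrite eq_sym.
have wu : w != u by rewrite eq_sym.
have d1 : index u (x :: p) != index v (x :: p) by apply/eqP => e; move/eqP: uv; apply; apply: inj.
have d2 : index v (x :: p) != index w (x :: p) by apply/eqP => e; move/eqP: vw; apply; apply: inj.
have d3 : index u (x :: p) != index w (x :: p) by apply/eqP => e; move/eqP: uw; apply; apply: inj.
case: (order3 d1 d2 d3) => [h|[h|[h|[h|[h|h]]]]].
- by apply: (key u v w m1 m2 m3 uv vw uw); move/andP: h => [h1 h2]; rewrite (ltnW h1) (ltnW h2).
- by apply: (key u w v m1 m3 m2 uw wv uv); move/andP: h => [h1 h2]; rewrite (ltnW h1) (ltnW h2).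
- by apply: (key v u w m2 m1 m3 vu uw vw); move/andP: h => [h1 h2]; rewrite (ltnW h1) (ltnW h2).
- by apply: (key v w u m2 m3 m1 vw wu vu); move/andP: h => [h1 h2]; rewrite (ltnW h1) (ltnW h2).
- by apply: (key w u v m3 m1 m2 wu uv wv); move/andP: h => [h1 h2]; rewrite (ltnW h1) (ltnW h2).
- by apply: (key w v u m3 m2 m1 wv vu wu); move/andP: h => [h1 h2]; rewrite (ltnW h1) (ltnW h2).
Qed.

End GP.

Set Implicit Arguments. Unset Strict Implicit. Unset Printing Implicit Defensive.

Definition betw p q s := (p <= q <= s) || (s <= q <= p).

Section ES.
Variable T : finType.

Definition prec (u : T -> nat) x y :=
  (u x < u y) || ((u x == u y) && (enum_rank x < enum_rank y)).

Lemma prec_irr u x : ~~ prec u x x.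
Proof. rewrite /prec; lia. Qed.

Lemma prec_trans u x y z : prec u x y -> prec u y z -> prec u x z.
Proof. rewrite /prec; lia. Qed.

Lemma prec_total u x y : x != y -> prec u x y || prec u y x.
Proof.
move=> ne; have : (enum_rank x : nat) != enum_rank y.
  by apply/eqP => /ord_inj /enum_rank_inj e; rewrite e eqxx in ne.
rewrite /prec; lia.
Qed.

Lemma prec_le u x y : prec u x y -> u x <= u y.
Proof. rewrite /prec; lia. Qed.

Lemma prec_neq u x y : prec u x y -> x != y.
Proof. by move=> h; apply/eqP => e; rewrite e in h; move: (prec_irr u y); rewrite h. Qed.

Lemma ES (X : {set T}) (u v : T -> nat) :
  (forall a b c, a \in X -> b \in X -> c \in X -> a != b -> b != c -> a != c ->
     betw (u a) (u b) (u c) -> betw (v a) (v b) (v c) -> False) -> #|X| <= 4.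
Proof.
move=> H.
pose lab x := ([exists w in X, prec u w x && (v w <= v x)],
               [exists w in X, prec u w x && (v x <= v w)]).
have key : forall x y, x \in X -> y \in X -> prec u x y -> lab x = lab y -> False.
  move=> x y xX yX pxy e.
  have tri : forall w, w \in X -> prec u w x -> betw (v w) (v x) (v y) -> False.
    move=> w wX pwx hb.
    have pwy := prec_trans pwx pxy.
    apply: (H w x y wX xX yX (prec_neq pwx) (prec_neq pxy) (prec_neq pwy)) => //.
    by rewrite /betw (prec_le pwx) (prec_le pxy).
  case: (leqP (v x) (v y)) => hv.
    have : (lab y).1 by apply/existsP; exists x; rewrite xX pxy hv.
    rewrite -e => /existsP[w /andP[wX /andP[pwx hw]]].
    by apply: (tri w wX pwx); rewrite /betw hw hv.
  have : (lab y).2 by apply/existsP; exists x; rewrite xX pxy (ltnW hv).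
  rewrite -e => /existsP[w /andP[wX /andP[pwx hw]]].
  by apply: (tri w wX pwx); rewrite /betw hw (ltnW hv) orbT.
have inj : {in X &, injective lab}.
  move=> x y xX yX e; apply/eqP; apply/negP => /negP ne.
  case/orP: (prec_total u ne) => p.
    exact: (key x y xX yX p e).
  exact: (key y x yX xX p (esym e)).
rewrite -(card_in_imset inj).
apply: leq_trans (max_card _) _.
by rewrite card_prod card_bool.
Qed.

Lemma le2 (X : {set T}) (u : T -> nat) : {in X &, injective u} ->
  (forall a b c, a \in X -> b \in X -> c \in X -> a != b -> b != c -> a != c ->
     betw (u a) (u b) (u c) -> False) -> #|X| <= 2.
Proof.
move=> uinj H.
pose lab x := [exists w in X, u w < u x].
have key : forall x y, x \in X -> y \in X -> u x < u y -> lab x = lab y -> False.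
  move=> x y xX yX lxy e.
  have : lab y by apply/existsP; exists x; rewrite xX lxy.
  rewrite -e => /existsP[w /andP[wX hw]].
  have ne : forall a b, u a < u b -> a != b.
    by move=> a b h; apply/eqP => ab; rewrite ab ltnn in h.
  apply: (H w x y wX xX yX (ne _ _ hw) (ne _ _ lxy) (ne _ _ (ltn_trans hw lxy))).
  by rewrite /betw (ltnW hw) (ltnW lxy).
have inj : {in X &, injective lab}.
  move=> x y xX yX e; apply: uinj => //.
  case: (ltngtP (u x) (u y)) => // h.
    by case: (key x y xX yX h e).
  by case: (key y x yX xX h (esym e)).
rewrite -(card_in_imset inj).
apply: leq_trans (max_card _) _.
by rewrite card_bool.
Qed.

End ES.

Set Implicit Arguments. Unset Strict Implicit. Unset Printing Implicit Defensive.

Definition off M k j := if k <= j then j - k else j + M - k.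

Lemma off_lt M k j : k < M -> j < M -> off M k j < M.
Proof. rewrite /off => ? ?; case: (leqP k j) => ?; lia. Qed.

Lemma off_inv M k j : k < M -> j < M -> off M (off M k j) j = k.
Proof. rewrite /off => ? ?; case: (leqP k j) => ?; case: leqP; lia. Qed.

Lemma off_cd M t k a b : M = 2 * t + 1 -> k < M -> a < M -> b < M ->
  off M k a <= t -> off M k b <= t -> cd M a b = absd (off M k a) (off M k b).
Proof.
rewrite /off /cd /absd => -> ? ? ?; case: (leqP k a) => ?; case: (leqP k b) => ?; lia.
Qed.

Lemma off_inj M k a b : k < M -> a < M -> b < M -> off M k a = off M k b -> a = b.
Proof. rewrite /off => ? ? ?; case: (leqP k a) => ?; case: (leqP k b) => ?; lia. Qed.

Lemma card_sum (T : finType) (A : {set T}) (P : pred T) :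
  #|[set x in A | P x]| = \sum_(x in A) (P x : nat).
Proof.
rewrite -sum1_card big_mkcond [RHS]big_mkcond /=.
apply: eq_bigr => x _; rewrite !inE; by case: (x \in A); case: (P x).
Qed.

Lemma count_win M t (j : 'I_M) : M = 2 * t + 1 ->
  \sum_(k < M) (off M k j <= t : nat) = t + 1.
Proof.
move=> hM.
have hinj : injective (fun k : 'I_M => (Ordinal (off_lt (ltn_ord k) (ltn_ord j)) : 'I_M)).
  move=> k1 k2 /(congr1 (@nat_of_ord M)) /= e.
  apply: ord_inj; rewrite -(off_inv (ltn_ord k1) (ltn_ord j)) -(off_inv (ltn_ord k2) (ltn_ord j)).
  by rewrite e.
rewrite (reindex_inj hinj) /=.
under eq_bigr => k _ do rewrite off_inv //.
rewrite -(big_mkord xpredT (fun k => (k <= t : nat))).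
rewrite (big_cat_nat (n := t + 1)) //=; last by lia.
rewrite (eq_big_nat _ _ (F2 := fun _ => 1)); last first.
  by move=> i /andP[_ h]; have -> : i <= t by lia.
rewrite [X in _ + X](eq_big_nat _ _ (F2 := fun _ => 0)); last first.
  by move=> i /andP[h _]; have -> : (i <= t) = false by lia.
rewrite !sum_nat_const_nat; lia.
Qed.

Lemma dcount (T : finType) M (A : {set T}) (col : T -> 'I_M) t c :
  M = 2 * t + 1 ->
  (forall k : 'I_M, #|[set x in A | off M k (col x) <= t]| <= c) ->
  (t + 1) * #|A| <= c * M.
Proof.
move=> hM H.
have h1 : \sum_(k < M) #|[set x in A | off M k (col x) <= t]| <= c * M.
  apply: (@leq_trans (\sum_(k < M) c)); first by apply: leq_sum => k _; exact: H k.
  by rewrite sum_nat_const card_ord mulnC.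
suff e : \sum_(k < M) #|[set x in A | off M k (col x) <= t]| = (t + 1) * #|A|.
  by rewrite -e.
under eq_bigr => k _ do rewrite card_sum.
rewrite exchange_big /=.
under eq_bigr => x _ do rewrite count_win //.
by rewrite sum_nat_const mulnC.
Qed.

Unset Implicit Arguments.
Lemma max2 t a1 b1 a2 b2 : a2 <= t -> b2 <= t ->
  2 * maxn (absd a1 b1) (absd a2 b2) = absd (a1 + a2) (b1 + b2) + absd (a1 + (t - a2)) (b1 + (t - b2)).
Proof. rewrite /absd. lia. Qed.
Lemma betw_abs p q s : betw p q s -> absd p q + absd q s = absd p s.
Proof. rewrite /betw /absd. lia. Qed.
Lemma linf t a1 b1 c1 a2 b2 c2 : a2 <= t -> b2 <= t -> c2 <= t ->
  betw (a1 + a2) (b1 + b2) (c1 + c2) -> betw (a1 + (t - a2)) (b1 + (t - b2)) (c1 + (t - c2)) ->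
  maxn (absd a1 b1) (absd a2 b2) + maxn (absd b1 c1) (absd b2 c2) <= maxn (absd a1 c1) (absd a2 c2).
Proof.
move=> ha hb hc h1 h2.
have e1 := max2 t a1 b1 a2 b2 ha hb. have e2 := max2 t b1 c1 b2 c2 hb hc. have e3 := max2 t a1 c1 a2 c2 ha hc.
have f1 := betw_abs _ _ _ h1. have f2 := betw_abs _ _ _ h2.
move: e1 e2 e3 f1 f2.
move: (maxn (absd a1 b1) (absd a2 b2)) (maxn (absd b1 c1) (absd b2 c2)) (maxn (absd a1 c1) (absd a2 c2)).
move: (absd (a1 + a2) (b1 + b2)) (absd (b1 + b2) (c1 + c2)) (absd (a1 + a2) (c1 + c2)).
move: (absd (a1 + (t - a2)) (b1 + (t - b2))) (absd (b1 + (t - b2)) (c1 + (t - c2))) (absd (a1 + (t - a2)) (c1 + (t - c2))).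
clear. move=> *. lia.
Qed.

Lemma absd0 i x : maxn (absd i i) x = x.
Proof. rewrite /absd; lia. Qed.

Set Implicit Arguments. Unset Strict Implicit. Unset Printing Implicit Defensive.

Section Win.
Variables R M t : nat.
Hypothesis hM : M = 2 * t + 1.
Notation T := ('I_R * 'I_M)%type.
Notation E := (strong_rel (@path_rel R) (@cycle_rel M)).

Lemma win4 (S : {set T}) (k : 'I_M) : gp_set E S ->
  #|[set x in S | off M k x.2 <= t]| <= 4.
Proof.
move=> gS.
apply: (@ES _ _ (fun x : T => x.1 + off M k x.2) (fun x : T => x.1 + (t - off M k x.2))).
move=> a b c; rewrite !inE => /andP[aS ao] /andP[bS bo] /andP[cS co] ab bc ac hu hv.
apply: (betw_notgp gS aS bS cS ab bc ac).
rewrite /Dist (off_cd hM (ltn_ord k) (ltn_ord a.2) (ltn_ord b.2) ao bo).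
rewrite (off_cd hM (ltn_ord k) (ltn_ord b.2) (ltn_ord c.2) bo co).
rewrite (off_cd hM (ltn_ord k) (ltn_ord a.2) (ltn_ord c.2) ao co).
exact: (linf _ _ _ _ _ _ _ ao bo co hu hv).
Qed.

Lemma row3 (S A : {set T}) (i0 : 'I_R) : gp_set E S -> A \subset S ->
  (forall x, x \in A -> x.1 = i0) -> #|A| <= 3.
Proof.
move=> gS sAS hrow.
have := @dcount _ M A snd t 2 hM.
suff H : forall k : 'I_M, #|[set x in A | off M k x.2 <= t]| <= 2.
  move=> /(_ H) h; have h' : (t + 1) * #|A| <= 2 * (2 * t + 1) by rewrite -hM.
  move: h'; move: #|A| => n; nia.
move=> k.
apply: (@le2 _ _ (fun x : T => off M k x.2)).
  move=> x y; rewrite !inE => /andP[xA _] /andP[yA _] e.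
  have e2 := off_inj (ltn_ord k) (ltn_ord x.2) (ltn_ord y.2) e.
  have e1 : x.1 = y.1 by rewrite (hrow x xA) (hrow y yA).
  move: e1 e2; case: x {xA e} => x1 x2; case: y {yA} => y1 y2 /= -> e2.
  by congr pair; apply: ord_inj.
move=> a b c; rewrite !inE => /andP[aA ao] /andP[bA bo] /andP[cA co] ab bc ac hu.
have aS := subsetP sAS a aA; have bS := subsetP sAS b bA; have cS := subsetP sAS c cA.
apply: (betw_notgp gS aS bS cS ab bc ac).
rewrite /Dist (off_cd hM (ltn_ord k) (ltn_ord a.2) (ltn_ord b.2) ao bo).
rewrite (off_cd hM (ltn_ord k) (ltn_ord b.2) (ltn_ord c.2) bo co).
rewrite (off_cd hM (ltn_ord k) (ltn_ord a.2) (ltn_ord c.2) ao co).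
rewrite (hrow a aA) (hrow b bA) (hrow c cA).
by rewrite !absd0 (betw_abs _ _ _ hu).
Qed.

Lemma gp_upper (S : {set T}) : gp_set E S -> (t + 1) * #|S| <= 4 * M.
Proof. by move=> gS; apply: (@dcount _ M S snd t 4 hM) => k; apply: win4. Qed.

End Win.

Set Implicit Arguments. Unset Strict Implicit. Unset Printing Implicit Defensive.

Lemma pbT (P : Prop) : P -> pb P.
Proof. by rewrite /pb; case: excluded_middle_informative. Qed.
Lemma pbE (P : Prop) : pb P -> P.
Proof. by rewrite /pb; case: excluded_middle_informative. Qed.

Definition col t (q : nat) := if q == 0 then 0 else if q == 1 then t else t.+1.

Lemma col_lt t (q : 'I_3) : 1 <= t -> col t q < 2 * t + 1.
Proof. rewrite /col => ?; cases; lia. Qed.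

Lemma D0nat t p1 q1 p2 q2 : 1 <= t -> p1 < 2 -> q1 < 2 -> p2 < 3 -> q2 < 3 ->
  (p1 != q1) || (p2 != q2) ->
  maxn (absd p1 q1) (cd (2 * t + 1) (col t p2) (col t q2)) =
  if (p2 == 0) == (q2 == 0) then 1 else t.
Proof. rewrite /cd /absd /col => *; cases; lia. Qed.

Section Lower.
Variables r t : nat.
Hypothesis hr : 2 <= r.
Hypothesis ht : 1 <= t.
Notation M := (2 * t + 1).
Notation T := ('I_r * 'I_M)%type.
Notation E := (strong_rel (@path_rel r) (@cycle_rel M)).

Definition f0 (p : 'I_2 * 'I_3) : T :=
  (Ordinal (leq_trans (ltn_ord p.1) hr), Ordinal (col_lt p.2 ht)).

Definition kap (p : 'I_2 * 'I_3) := (nat_of_ord p.2 == 0).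

Lemma f0_inj : injective f0.
Proof.
move=> [p1 p2] [q1 q2] e.
have e1 := congr1 (fun x => nat_of_ord x.1) e.
have e2 := congr1 (fun x => nat_of_ord x.2) e.
move: e1 e2 => /= e1; rewrite /col => e2.
have hp := ltn_ord p2; have hq := ltn_ord q2.
have h2 : nat_of_ord p2 = q2.
  move: e2; cases; lia.
by congr pair; apply: ord_inj.
Qed.

Lemma D0 p q : p != q -> Dist (f0 p) (f0 q) = if kap p == kap q then 1 else t.
Proof.
move=> pq.
have pn : (nat_of_ord p.1 != q.1) || (nat_of_ord p.2 != q.2).
  case: p q pq => [p1 p2] [q1 q2] /=; apply: contraR => /norP[/negPn/eqP a /negPn/eqP b].
  by apply/eqP; congr pair; apply: ord_inj.
rewrite /Dist /kap /f0 /=.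
apply: D0nat => //; exact: ltn_ord.
Qed.

Lemma S0_gp : gp_set E (f0 @: setT).
Proof.
apply: gp_of_strict => a b c /imsetP[pa _ ->] /imsetP[pb _ ->] /imsetP[pc _ ->] ab bc ac.
have ne : forall p q, f0 p != f0 q -> p != q.
  by move=> p q; apply: contra => /eqP ->.
rewrite (D0 (ne _ _ ab)) (D0 (ne _ _ bc)) (D0 (ne _ _ ac)).
move: (kap pa) (kap pb) (kap pc) => [] [] [] /=; lia.
Qed.

Lemma S0_card : 6 <= #|f0 @: setT|.
Proof. by rewrite card_imset; [rewrite cardsT card_prod !card_ord | exact: f0_inj]. Qed.

End Lower.

Set Implicit Arguments. Unset Strict Implicit. Unset Printing Implicit Defensive.

Lemma r2_upper t (S : {set ('I_2 * 'I_(2 * t + 1))}) :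
  gp_set (strong_rel (@path_rel 2) (@cycle_rel (2 * t + 1))) S -> #|S| <= 6.
Proof.
move=> gS.
pose B := [set x : 'I_2 * 'I_(2 * t + 1) | x.1 == ord0].
rewrite -(cardsID B S).
have h1 : #|S :&: B| <= 3.
  apply: (@row3 2 _ t erefl S _ ord0 gS); first exact: subsetIl.
  by move=> x; rewrite !inE => /andP[_ /eqP].
have h2 : #|S :\: B| <= 3.
  apply: (@row3 2 _ t erefl S _ (Ordinal (isT : 1 < 2)) gS); first exact: subsetDl.
  move=> x; rewrite !inE => /andP[h _]; apply: ord_inj => /=.
  have := ltn_ord x.1; move: h; rewrite -val_eqE /=; lia.
exact: (leq_add h1 h2).
Qed.

Theorem theorem4p6 (r t : nat) (hr : 2 <= r) (ht : 1 <= t) :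
  let g := gp (strong_rel (@path_rel r) (@cycle_rel (2 * t + 1))) in
  (6 <= g <= 7) /\ ((t == 1) || (t == 2) || (r == 2) -> g = 6).
Proof.
move=> g.
have low : 6 <= g.
  apply: leq_trans (@S0_card r t hr ht) _.
  rewrite /g /gp; apply: leq_bigmax_cond.
  apply: pbT. exact (@S0_gp r t hr ht).
have upc : forall S, gp_set (strong_rel (@path_rel r) (@cycle_rel (2 * t + 1))) S ->
    (t + 1) * #|S| <= 4 * (2 * t + 1).
  by move=> S gS; apply: (@gp_upper r (2 * t + 1) t erefl S gS).
have up7 : g <= 7.
  apply/bigmax_leqP => S /pbE gS; have := upc S gS; move: #|S| => n; nia.
split; first by rewrite low up7.
case/orP => [/orP[/eqP t1|/eqP t2]|/eqP r2]; apply/eqP; rewrite eqn_leq low andbT.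
- apply/bigmax_leqP => S /pbE gS; have := upc S gS; move: #|S| => n; rewrite t1; lia.
- apply/bigmax_leqP => S /pbE gS; have := upc S gS; move: #|S| => n; rewrite t2; lia.
- subst r; apply/bigmax_leqP => S /pbE gS; exact: r2_upper gS.
Qed.
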